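(* Let $\Sigma=\{1,\dots,q\}^{\mathbb N}$ with shift $\sigma$, $\psi:\Sigma\to\mathbb R$ continuous, and let $\mu$ be a conformal measure for $\psi$ (i.e. $\mathcal L_\psi^*\mu=r(\mathcal L_\psi)\mu$). If there is a constant $C>0$ such that $\liminf_{n\to\infty}\xi_n(\underline x)\le C$ for $\mu$-a.e. $\underline x\in\Sigma$, then $\mu$ is a sequential Gibbs measure for $\psi$.
   Context: $\mathcal L_\psi\phi(\underline x)=\sum_{\underline y\in\sigma^{-1}\underline x}e^{\psi(\underline y)}\phi(\underline y)$ on continuous functions, $r(\mathcal L_\psi)$ its spectral radius, $(\mathcal L_\psi^*\mu)(\phi)=\int\mathcal L_\psi\phi\,d\mu$. Cylinders $[a_0\dots a_{n-1}]=\{\underline y:y_i=a_i,0\le i<n\}$; $\psi^n=\sum_{i<n}\psi\circ\sigma^i$. $\xi_n(\underline x)=\sup_{\underline y\in[x_0\dots x_{n-1}]}\sum_{i=0}^{n-1}|\psi(\sigma^i\underline x)-\psi(\sigma^i\underline y)|$. $\mu$ is a sequential Gibbs measure for $\psi$ if there are constants $K\ge1,P$ such that for $\mu$-a.e. $\underline x$ there is an increasing sequence $n_i(\underline x)$ with $K^{-1}\le\mu([x_j\dots x_{n_i-1}])e^{-\psi^{n_i-j}(\sigma^j\underline x)+(n_i-j)P}\le K$ for all $i$ and $0\le j\le n_i-1$. *)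

(* Defs.v *)
From HB Require Import structures.
From mathcomp Require Import all_boot all_order all_algebra.
From mathcomp Require Import all_classical all_reals all_analysis.
Set Implicit Arguments. Unset Strict Implicit. Unset Printing Implicit Defensive.
Import Order.TTheory GRing.Theory Num.Theory.
Local Open Scope ring_scope.
Local Open Scope classical_set_scope.

(* The full shift on q symbols: sequences nat -> 'I_q.-1.+1 ; under the
   hypothesis 0 < q, the alphabet 'I_q.-1.+1 is {0,...,q-1} ~ {1,...,q}. *)
Definition Alph (q : nat) := 'I_q.-1.+1.
HB.instance Definition _ (q : nat) := Finite.on (Alph q).
HB.instance Definition _ (q : nat) := isPointed.Build (Alph q) ord0.
Definition seqs (q : nat) := nat -> Alph q.

Definition cyl (q : nat) (x : seqs q) (n : nat) : set (seqs q) :=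
  [set y | forall i, (i < n)%N -> y i = x i].

Definition cylinders (q : nat) : set (set (seqs q)) :=
  [set A | exists (x : seqs q) (n : nat), A = cyl x n].

(* Sigma with its Borel sigma-algebra (generated by the cylinders, which form a
   countable base of clopen sets of the product topology). *)
Definition Sigma (q : nat) := g_sigma_algebraType (@cylinders q).

Definition shift (q : nat) (x : seqs q) : seqs q := fun k => x k.+1.
Definition shiftn (q : nat) (i : nat) (x : seqs q) : seqs q := fun k => x (k + i)%N.

Definition scons (q : nat) (a : Alph q) (x : seqs q) : seqs q :=
  fun k => if k is k'.+1 then x k' else a.

(* continuity for the product topology of discrete factors *)
Definition continuous_on_shift {R : realType} (q : nat) (f : seqs q -> R) :=
  forall (x : seqs q) (e : R), 0 < e ->
    exists n : nat, forall y, cyl x n y -> `|f x - f y| < e.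

Definition birkhoff {R : realType} (q : nat) (psi : seqs q -> R) (n : nat)
  (x : seqs q) : R := \sum_(i < n) psi (shiftn i x).

Definition transfer {R : realType} (q : nat) (psi : seqs q -> R)
  (phi : seqs q -> R) : seqs q -> R :=
  fun x => \sum_(a : Alph q) expR (psi (scons a x)) * phi (scons a x).

Definition supnorm {R : realType} (q : nat) (f : seqs q -> R) : R :=
  sup [set `|f x| | x in [set: seqs q]].

Definition opnorm {R : realType} (q : nat)
  (T : (seqs q -> R) -> (seqs q -> R)) : R :=
  sup [set supnorm (T phi) | phi in
        [set phi | continuous_on_shift phi /\ supnorm phi <= 1]].

(* spectral radius of L_psi on C(Sigma), by Gelfand's formula
   r = lim_n ||L^n||^{1/n} = inf_{n >= 1} ||L^n||^{1/n} *)
Definition spectral_radius_transfer {R : realType} (q : nat)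
  (psi : seqs q -> R) : R :=
  inf [set (opnorm (iter n.+1 (transfer psi))) `^ (n.+1%:R)^-1
       | n in [set: nat]].

Definition conformal {R : realType} (q : nat) (psi : seqs q -> R)
  (mu : probability (Sigma q) R) :=
  forall phi : seqs q -> R, continuous_on_shift phi ->
    (\int[mu]_x (transfer psi phi x)%:E =
     (spectral_radius_transfer psi)%:E * \int[mu]_x (phi x)%:E)%E.

Definition xi {R : realType} (q : nat) (psi : seqs q -> R) (n : nat)
  (x : seqs q) : \bar R :=
  ereal_sup [set (\sum_(i < n) `|psi (shiftn i x) - psi (shiftn i y)|)%:E
            | y in cyl x n].

Definition cyl_from (q : nat) (x : seqs q) (j m : nat) : set (seqs q) :=
  [set y | forall i, (i < m - j)%N -> y i = x (j + i)%N].

Definition sequential_Gibbs {R : realType} (q : nat) (psi : seqs q -> R)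
  (mu : probability (Sigma q) R) :=
  exists (K P : R), 1 <= K /\
    {ae mu, forall x : Sigma q,
      exists ns : nat -> nat, (forall i, (ns i < ns i.+1)%N) /\
        forall i j, (j < ns i)%N ->
          (K^-1%:E <= mu (cyl_from x j (ns i)) *
             (expR (- birkhoff psi (ns i - j) (shiftn j x)
                    + (ns i - j)%:R * P))%:E
           <= K%:E)%E}.

(* Main.v *)
Require Import Defs.
From HB Require Import structures.
From mathcomp Require Import all_boot all_order all_algebra.
From mathcomp Require Import all_classical all_reals all_analysis.
From mathcomp Require Import zify ring lra.
Set Implicit Arguments. Unset Strict Implicit.
Import Order.TTheory GRing.Theory Num.Theory.
Local Open Scope ring_scope.
Local Open Scope classical_set_scope.

Section S.
Variables (R : realType) (q : nat).
Implicit Types (f g : seqs q -> R).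

Lemma expR_eps (a e : R) : 0 < e ->
  exists2 d : R, 0 < d & forall b, `|a - b| < d -> `|expR a - expR b| < e.
Proof.
move=> e0.
have := @continuous_expR R a => /cvgrPdist_lt /(_ e e0).
by move=> /nbhs_ballP [d /= d0 H]; exists d => // b ab.
Qed.

Lemma cyl_le (x y : seqs q) m n : (m <= n)%N -> cyl x n y -> cyl x m y.
Proof. by move=> mn H i im; apply: H; apply: leq_trans mn. Qed.
Arguments cyl_le {x y m n}.

Lemma cont_cst (c : R) : continuous_on_shift (fun _ : seqs q => c).
Proof. by move=> x e e0; exists 0%N => y _; rewrite subrr normr0. Qed.

Lemma cont_add f g : continuous_on_shift f -> continuous_on_shift g ->
  continuous_on_shift (fun x => f x + g x).
Proof.
move=> cf cg x e e0.
have e20 : 0 < e / 2 by rewrite divr_gt0.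
have [n1 H1] := cf x _ e20; have [n2 H2] := cg x _ e20.
exists (maxn n1 n2) => y hy.
have := H1 y (cyl_le (leq_maxl _ _) hy); have := H2 y (cyl_le (leq_maxr _ _) hy).
move=> a b; rewrite (_ : f x + g x - (f y + g y) = (f x - f y) + (g x - g y)); last first.
  by rewrite opprD addrACA.
by rewrite (le_lt_trans (ler_normD _ _)) // (splitr e) ltrD.
Qed.

Lemma cont_sum n (F : 'I_n -> seqs q -> R) : (forall i, continuous_on_shift (F i)) ->
  continuous_on_shift (fun x => \sum_(i < n) F i x).
Proof.
elim: n F => [|n IH] F cF.
  by under eq_fun do rewrite big_ord0; exact: cont_cst.
under eq_fun do rewrite big_ord_recr /=.
apply: cont_add => //; exact: IH.
Qed.

Lemma cont_exp f : continuous_on_shift f -> continuous_on_shift (fun x => expR (f x)).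
Proof.
move=> cf x e e0; have [d d0 Hd] := @expR_eps (f x) e e0.
have [n Hn] := cf x d d0; exists n => y hy; exact: Hd (Hn y hy).
Qed.

Lemma cont_comp f (g : seqs q -> seqs q) : continuous_on_shift f ->
  (forall x n, exists N, forall y, cyl x N y -> cyl (g x) n (g y)) ->
  continuous_on_shift (fun x => f (g x)).
Proof.
move=> cf hg x e e0; have [n Hn] := cf (g x) e e0.
have [N HN] := hg x n; exists N => y hy; exact: Hn _ (HN _ hy).
Qed.

Lemma cont_indic f (w : seqs q) m : continuous_on_shift f ->
  continuous_on_shift (fun x => \1_(cyl w m) x * f x).
Proof.
move=> cf x e e0; have [n Hn] := cf x e e0.
exists (maxn n m) => y hy.
have hyn := Hn y (cyl_le (leq_maxl _ _) hy).
have hym : cyl x m y := cyl_le (leq_maxr _ _) hy.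
have E : (cyl w m x <-> cyl w m y).
  split=> H i im; rewrite -H //; [|symmetry]; exact: hym.
rewrite !indicE; case: (boolP (x \in cyl w m)) => hx.
  have hy' : y \in cyl w m by apply/mem_set/E/set_mem.
  by rewrite hy' !mul1r.
have hy' : y \notin cyl w m.
  by apply/negP => /set_mem/E/mem_set; apply/negP.
by rewrite (negbTE hy') !mul0r subrr normr0.
Qed.


Definition prep (z : seqs q) (k : nat) (y : seqs q) : seqs q :=
  fun i => if (i < k)%N then z i else y (i - k)%N.

Lemma prep_scons z k y : prep z k (scons (z k) y) = prep z k.+1 y.
Proof.
apply: funext => i; rewrite /prep /scons.
case: (ltnP i k) => ik; first by rewrite ltnW.
case: (ltnP i k.+1) => ik1.
  have -> : i = k by apply/eqP; rewrite eqn_leq ik -ltnS ik1.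
  by rewrite subnn.
by rewrite -[(i - k)%N](subnSK ik1).
Qed.

Lemma shiftn_prep z k y : shiftn k (prep z k y) = y.
Proof.
apply: funext => i; rewrite /shiftn /prep.
by rewrite ltnNge leq_addl /= addnK.
Qed.

Lemma shiftn_prepS z k y : shiftn k (prep z k.+1 y) = scons (z k) y.
Proof. by rewrite -prep_scons shiftn_prep. Qed.

Lemma prep_cyl z k y : cyl z k (prep z k y).
Proof. by move=> i ik; rewrite /prep ik. Qed.

Lemma prep0 z y : prep z 0 y = y.
Proof. by apply: funext => i; rewrite /prep /= subn0. Qed.

Lemma birkhoffS (psi : seqs q -> R) k u :
  birkhoff psi k.+1 u = birkhoff psi k u + psi (shiftn k u).
Proof. by rewrite /birkhoff big_ord_recr. Qed.

Lemma cont_birk_prep (psi : seqs q -> R) z k : continuous_on_shift psi ->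
  continuous_on_shift (fun y => birkhoff psi k (prep z k y)).
Proof.
move=> cpsi; apply: cont_sum => i.
apply: (@cont_comp psi (fun y => shiftn i (prep z k y))) => // x n.
exists (n + i)%N => y hy j jn; rewrite /shiftn /prep.
case: ifP => // /negbT; rewrite -leqNgt => kji; apply: hy.
rewrite ltn_subLR //; lia.
Qed.

Definition fk (psi : seqs q -> R) (z : seqs q) (m k : nat) (y : seqs q) : R :=
  \1_(cyl (shiftn k z) (m - k)) y * expR (birkhoff psi k (prep z k y)).

Lemma cont_fk psi z m k : continuous_on_shift psi -> continuous_on_shift (fk psi z m k).
Proof. by move=> cpsi; apply: cont_indic; apply: cont_exp; apply: cont_birk_prep. Qed.

Lemma cyl_scons (z : seqs q) k m (y : seqs q) : (k < m)%N ->
  cyl (shiftn k z) (m - k) (scons (z k) y) = cyl (shiftn k.+1 z) (m - k.+1) y.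
Proof.
move=> km; apply: propext; split => [H i im|H [|i] im] /=.
- have := H i.+1; rewrite /scons /shiftn addSnnS => -> //; lia.
- by rewrite /shiftn.
- rewrite /scons H /shiftn ?addSnnS //; lia.
Qed.

Lemma transfer_fk psi z m k : (k < m)%N ->
  transfer psi (fk psi z m k) = fk psi z m k.+1.
Proof.
move=> km; apply: funext => y; rewrite /transfer (bigD1 (z k)) //= big1; last first.
  move=> a ha; rewrite /fk indicE.
  suff -> : (scons a y \in cyl (shiftn k z) (m - k)) = false by rewrite mulr0n mul0r mulr0.
  apply/negP => /set_mem /(_ 0%N) H.
  have := H (ltac:(lia)); rewrite /scons /shiftn add0n => E.
  by rewrite E eqxx in ha.
rewrite addr0 /fk !indicE.
have -> : (scons (z k) y \in cyl (shiftn k z) (m - k)) = (y \in cyl (shiftn k.+1 z) (m - k.+1)).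
  by apply/idP/idP => /set_mem H; apply/mem_set; [rewrite -cyl_scons | rewrite cyl_scons].
rewrite prep_scons birkhoffS shiftn_prepS expRD.
ring.
Qed.
End S.


Section T.
Variables (R : realType) (q : nat) (mu : probability (Sigma q) R).

Lemma meas_cyl (z : seqs q) m : measurable (cyl z m : set (Sigma q)).
Proof. by apply: sub_gen_smallest; exists z, m. Qed.

Lemma int_mono (f g : seqs q -> R) : (forall x, 0 <= f x) -> (forall x, f x <= g x) ->
  (\int[mu]_x (f x)%:E <= \int[mu]_x (g x)%:E)%E.
Proof.
move=> f0 fg.
have f0' : forall x, (0 <= (f x)%:E)%E by move=> x; rewrite lee_fin.
have g0' : forall x, (0 <= (g x)%:E)%E by move=> x; rewrite lee_fin (le_trans (f0 x)).
rewrite !ge0_integralTE //.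
apply: ereal_sup_le => _ [h /= hf <-]; exists h => //= x.
by rewrite (le_trans (hf x)) // lee_fin.
Qed.

Lemma int_cst (c : R) : (\int[mu]_x (c%:E) = c%:E)%E.
Proof.
have := @integral_cst _ _ R mu setT measurableT c%:E.
move=> ->; have h : forall x : \bar R, x = 1%E -> (c%:E * x = c%:E)%E by move=> x ->; rewrite mule1.
apply: h; exact: probability_setT.
Qed.

Lemma int_fk psi z m k : continuous_on_shift psi -> conformal psi mu -> (k <= m)%N ->
  (\int[mu]_x (fk psi z m k x)%:E =
   ((spectral_radius_transfer psi) ^+ k)%:E * mu (cyl z m))%E.
Proof.
move=> cpsi hconf; elim: k => [_|k IH km].
  rewrite expr0 mul1e -[X in mu X]setIT -integral_indic; [|exact: (@measurableT _ (Sigma q))|exact: meas_cyl].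
  apply: eq_integral => x _; rewrite /fk subn0 /birkhoff big_ord0 expR0 mulr1.
  by rewrite (_ : shiftn 0 z = z) //; apply: funext => i; rewrite /shiftn addn0.
rewrite (eq_integral (fun x : Sigma q => (transfer psi (fk psi z m k) x)%:E)); last first.
  by move=> x _; rewrite transfer_fk.
rewrite hconf; last exact: cont_fk.
by rewrite IH ?(ltnW km) // muleA -EFinM exprS.
Qed.
End T.


Section U.
Variables (R : realType) (q : nat).
Implicit Types (psi : seqs q -> R) (x y z : seqs q).

Lemma shiftn_shiftn x i j : shiftn i (shiftn j x) = shiftn (j + i) x.
Proof. by apply: funext => k; rewrite /shiftn; congr x; lia. Qed.

Lemma shiftn_prep2 x i j m y :
  shiftn i (prep (shiftn j x) m y) = shiftn (j + i) (prep x (j + m) y).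
Proof.
apply: funext => k; rewrite /shiftn /prep.
have -> : (k + (j + i) < j + m)%N = (k + i < m)%N by lia.
case: ifP => _; first by congr x; lia.
by congr y; lia.
Qed.

Lemma birk_diff psi x j m y :
  `|birkhoff psi m (prep (shiftn j x) m y) - birkhoff psi m (shiftn j x)| <=
  \sum_(i < j + m) `|psi (shiftn i x) - psi (shiftn i (prep x (j + m) y))|.
Proof.
rewrite /birkhoff -sumrB (le_trans (ler_norm_sum _ _ _)) //.
rewrite big_split_ord /= -[X in X <= _]add0r lerD ?sumr_ge0 //.
apply: ler_sum => i _ /=; rewrite distrC shiftn_prep2 shiftn_shiftn.
done.
Qed.

Lemma xi_ub psi x n u : cyl x n u ->
  ((\sum_(i < n) `|psi (shiftn i x) - psi (shiftn i u)|)%:E <= xi psi n x)%E.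
Proof. by move=> hu; apply: ereal_sup_ubound; exists u. Qed.

Lemma cyl_from_E x j n : cyl_from x j n = cyl (shiftn j x) (n - j).
Proof.
apply: funext => y; apply: propext; split => H i hi; rewrite H //= /shiftn addnC //.
Qed.

End U.


Lemma key_bound (R : realType) (q : nat) (mu : probability (Sigma q) R)
  (psi : seqs q -> R) (hpsi : continuous_on_shift psi) (hconf : conformal psi mu)
  (x : seqs q) (j m : nat) (D : R) :
  (xi psi (j + m) x < D%:E)%E ->
  ((expR (birkhoff psi m (shiftn j x) - D))%:E <=
    ((spectral_radius_transfer psi) ^+ m)%:E * mu (cyl (shiftn j x) m)
   <= (expR (birkhoff psi m (shiftn j x) + D))%:E)%E.
Proof.
move=> hxi; set z := shiftn j x; set B := birkhoff psi m z.
rewrite -(@int_fk R q mu psi z m m hpsi hconf (leqnn m)).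
have hb : forall y, `|birkhoff psi m (prep z m y) - B| <= D.
  move=> y; rewrite (le_trans (birk_diff _ _ _ _ _)) // -lee_fin.
  apply/ltW/(le_lt_trans _ hxi); apply: xi_ub; exact: prep_cyl.
have fkE : forall y, fk psi z m m y = expR (birkhoff psi m (prep z m y)).
  move=> y; rewrite /fk indicE subnn.
  by rewrite (_ : y \in _) ?mul1r //; apply/mem_set => i.
apply/andP; split.
  rewrite -(int_cst mu); apply: int_mono => y; first exact: expR_ge0.
  rewrite fkE ler_expR; have := hb y; rewrite ler_norml; lra.
rewrite -(int_cst mu); apply: int_mono => y; first by rewrite fkE expR_ge0.
rewrite fkE ler_expR; have := hb y; rewrite ler_norml; lra.
Qed.

Lemma mu_real (R : realType) (q : nat) (mu : probability (Sigma q) R) (z : seqs q) m :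
  exists a : R, mu (cyl z m) = a%:E /\ 0 <= a.
Proof.
have h0 : (0 <= mu (cyl z m))%E := measure_ge0 mu (cyl z m : set (Sigma q)).
have h1 : (mu (cyl z m) <= 1)%E := probability_le1 mu (meas_cyl z m).
have hf : mu (cyl z m) \is a fin_num by rewrite ge0_fin_numE // (le_lt_trans h1) ?ltey.
by exists (fine (mu (cyl z m))); split; [rewrite fineK | rewrite fine_ge0].
Qed.

Unset Implicit Arguments. Set Strict Implicit.

Theorem proposition4 (R : realType) (q : nat) (hq : (0 < q)%N)
  (psi : seqs q -> R) (hpsi : continuous_on_shift psi)
  (mu : probability (Sigma q) R) (hconf : conformal psi mu)
  (C : R) (hC : 0 < C)
  (hxi : {ae mu, forall x : Sigma q, (limn_einf (fun n => xi psi n x) <= C%:E)%E}) :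
  sequential_Gibbs psi mu.
Proof.
set lam := spectral_radius_transfer psi.
set D := C + 1.
exists (expR D), (ln lam); split.
  by rewrite -expR0 ler_expR /D; lra.
move: hxi; apply: filterS => x hx.
have hN : forall N, exists n, (N <= n)%N /\ (xi psi n x < D%:E)%E.
  move=> N.
  have : (einfs (fun n => xi psi n x) N < D%:E)%E.
    apply: (le_lt_trans _ (_ : C%:E < D%:E)%E); last by rewrite lte_fin /D; lra.
    apply: le_trans hx; rewrite limn_einf_lim.
    apply: lime_ge; first exact: is_cvg_einfs.
    by exists N => // n /= Nn; apply: nondecreasing_einfs.
  by move=> /ereal_inf_lt [_ [n /= Nn <-]] hn; exists n.
have [g hg] := choice hN.
pose ns i := iter i.+1 (fun k => g k.+1) 0%N.
have nsE i : ns i = g (iter i (fun k => g k.+1) 0%N).+1 by [].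
have ns_gt0 i : (0 < ns i)%N by rewrite nsE (leq_trans _ (hg _).1).
have ns_xi i : (xi psi (ns i) x < D%:E)%E by rewrite nsE (hg _).2.
have lam0 : 0 < lam.
  have h1 : (xi psi ((ns 0%N).-1 + 1) x < D%:E)%E by rewrite addn1 prednK.
  have := key_bound hpsi hconf h1.
  have [a [-> a0]] := mu_real mu (shiftn (ns 0%N).-1 x) 1.
  rewrite -EFinM !lee_fin expr1 => /andP [h2 _].
  have h3 := expR_gt0 (birkhoff psi 1 (shiftn (ns 0%N).-1 x) - D).
  rewrite /lam; case: (ltrP 0 (spectral_radius_transfer psi)) => // hl.
  have h4 := mulr_le0_ge0 hl a0.
  by have := lt_le_trans h3 (le_trans h2 h4); rewrite ltxx.
exists ns; split.
  by move=> i; rewrite [ns i.+1]nsE (hg _).1.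
move=> i j ji.
have h1 : (xi psi (j + (ns i - j)) x < D%:E)%E by rewrite subnKC ?ns_xi // ltnW.
have := key_bound hpsi hconf h1.
rewrite cyl_from_E.
have [a [-> a0]] := mu_real mu (shiftn j x) (ns i - j).
rewrite -!EFinM !lee_fin -/lam => /andP [h2 h3].
set B := birkhoff psi (ns i - j) _ in h2 h3 *.
rewrite [expR (- _ + _)]expRD expRM_natl lnK ?posrE // expRN.
rewrite [expR (B - D)]expRD [expR (B + D)]expRD expRN in h2 h3.
have E0 := expR_gt0 B; have F0 := expR_gt0 D.
move: (expR B) (expR D) E0 F0 h2 h3 => E F E0 F0 h2 h3.
rewrite (_ : a * ((E)^-1 * lam ^+ (ns i - j)) = (lam ^+ (ns i - j) * a) / E); last first.
  by ring.
apply/andP; split.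
  by rewrite ler_pdivlMr // mulrC.
by rewrite ler_pdivrMr // [F * E]mulrC.
Qed.
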